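(* For every observed law $\mathcal{P}$ of $(Y,D,Z)$ we have $U(\mathcal{P})=-L(\bar{\mathcal{P}})$, where $\bar{\mathcal{P}}$ is the law defined by $\bar{\mathcal{P}}(Y=y,D=d,Z=z)=\mathcal{P}(Y=y,D=1-d,Z=z)$ for all $y,d,z$.
   Context: Instrumental variable (IV) setting: $D\in\{0,1\}$ is a treatment, $Y$ an outcome taking values in a finite set $\{\gamma_0<\gamma_1<\dots<\gamma_{n-1}\}\subset\mathbb{R}$, and $Z$ an instrument taking values in $[\ell]:=\{0,\dots,\ell-1\}$. For $d\in\{0,1\}$, $z\in[\ell]$, $Y^{(d,z)}$ denotes the potential outcome of $Y$ under $D=d,Z=z$, and $D^{(z)}$ the potential treatment under $Z=z$. The IV model consists of: (Exclusion) $Y^{(d,z)}=Y^{(d,z')}$ a.s. for all $z,z'\in[\ell]$, $d\in\{0,1\}$, so one writes $Y^{(d)}$; (Random assignment) $Z$ is independent of $(Y^{(0)},Y^{(1)},D^{(0)},\dots,D^{(\ell-1)})$; (Consistency) $Y=(1-D)Y^{(0)}+DY^{(1)}$ and $D=\sum_{z\in[\ell]}\mathbb{1}(Z=z)D^{(z)}$. A full data law is a joint law of $(Y^{(0)},Y^{(1)},D^{(0)},\dots,D^{(\ell-1)},Z)$; it induces an observed law of $(Y,D,Z)$ via consistency. The average treatment effect is $\mathrm{ATE}=\mathbb{E}[Y^{(1)}-Y^{(0)}]$. For an observed law $\mathcal{P}$, $L(\mathcal{P})$ and $U(\mathcal{P})$ denote the infimum and supremum of ATE over all full data laws satisfying exclusion,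 random assignment and consistency that induce $\mathcal{P}$ (with $\inf\emptyset=+\infty$, $\sup\emptyset=-\infty$). *)

(* Defs.v *)
From HB Require Import structures.
From mathcomp Require Import all_boot all_order all_algebra.
From mathcomp Require Import all_classical all_reals ereal.
Set Implicit Arguments. Unset Strict Implicit. Unset Printing Implicit Defensive.
Import Order.TTheory GRing.Theory Num.Theory.
Local Open Scope ring_scope.
Local Open Scope classical_set_scope.

(* Y takes values gamma_0 < ... < gamma_{n-1}; we index outcome values by 'I_n.
   Z takes values in 'I_l, D in bool (false = 0, true = 1). *)

Definition obs_law (R : realType) (n l : nat) := {ffun ('I_n * bool * 'I_l) -> R}.

(* A full data law of (Y^(0), Y^(1), (D^(z))_{z in [l]}, Z).  Exclusion is built
   in: potential outcomes are indexed by d only. *)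
Definition full_var (n l : nat) := ('I_n * 'I_n * {ffun 'I_l -> bool} * 'I_l)%type.
Definition full_law (R : realType) (n l : nat) := {ffun full_var n l -> R}.

Definition is_pmf (R : realType) (T : finType) (p : {ffun T -> R}) : Prop :=
  (forall t, 0 <= p t) /\ \sum_(t : T) p t = 1.

(* Random assignment: Z independent of (Y^(0),Y^(1),D^(0..l-1)), i.e. the joint
   pmf is the product of the two marginals. *)
Definition rand_assign (R : realType) (n l : nat) (q : full_law R n l) : Prop :=
  forall (y0 y1 : 'I_n) (dv : {ffun 'I_l -> bool}) (z : 'I_l),
    q (y0, y1, dv, z) =
      (\sum_(z' : 'I_l) q (y0, y1, dv, z')) *
      (\sum_(a0 : 'I_n) \sum_(a1 : 'I_n) \sum_(av : {ffun 'I_l -> bool}) q (a0, a1, av, z)).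

(* Consistency: D = D^(Z), Y = (1-D) Y^(0) + D Y^(1). *)
Definition obs_of (n l : nat) (w : full_var n l) : 'I_n * bool * 'I_l :=
  let '(y0, y1, dv, z) := w in (if dv z then y1 else y0, dv z, z).

Definition induced (R : realType) (n l : nat) (q : full_law R n l) : obs_law R n l :=
  [ffun o => \sum_(w : full_var n l | obs_of w == o) q w].

Definition ATE (R : realType) (n l : nat) (gamma : 'I_n -> R) (q : full_law R n l) : R :=
  \sum_(w : full_var n l) q w * (gamma w.1.1.2 - gamma w.1.1.1).

Definition compatible (R : realType) (n l : nat) (P : obs_law R n l) (q : full_law R n l) : Prop :=
  is_pmf q /\ rand_assign q /\ induced q = P.

(* L(P) and U(P), with inf of empty = +oo and sup of empty = -oo. *)
Definition Lbound (R : realType) (n l : nat) (gamma : 'I_n -> R) (P : obs_law R n l) : \bar R :=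
  ereal_inf [set (ATE gamma q)%:E | q in [set q | compatible P q]].

Definition Ubound (R : realType) (n l : nat) (gamma : 'I_n -> R) (P : obs_law R n l) : \bar R :=
  ereal_sup [set (ATE gamma q)%:E | q in [set q | compatible P q]].

Definition bar_law (R : realType) (n l : nat) (P : obs_law R n l) : obs_law R n l :=
  [ffun o => P (o.1.1, ~~ o.1.2, o.2)].

(* Main.v *)
Require Import Defs.
From HB Require Import structures.
From mathcomp Require Import all_boot all_order all_algebra.
From mathcomp Require Import all_classical all_reals ereal.
Import Order.TTheory GRing.Theory Num.Theory.
Local Open Scope ring_scope.

Section Aux.
Variables (R : realType) (n l : nat).

Definition negf (dv : {ffun 'I_l -> bool}) : {ffun 'I_l -> bool} :=
  [ffun i => ~~ dv i].

Lemma negfK : involutive negf.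
Proof. by move=> dv; apply/ffunP => i; rewrite !ffunE negbK. Qed.

Definition sw (w : full_var n l) : full_var n l :=
  let '(y0, y1, dv, z) := w in (y1, y0, negf dv, z).

Lemma swK : involutive sw.
Proof. by case=> [[[y0 y1] dv] z] /=; rewrite negfK. Qed.

Lemma sw_inj : injective sw.
Proof. exact: inv_inj swK. Qed.

Definition qs (q : full_law R n l) : full_law R n l := [ffun w => q (sw w)].

Lemma qsK : involutive qs.
Proof. by move=> q; apply/ffunP => w; rewrite !ffunE swK. Qed.

Lemma sum_sw (F : full_var n l -> R) :
  \sum_(w : full_var n l) F (sw w) = \sum_(w : full_var n l) F w.
Proof. by rewrite [RHS](reindex_inj sw_inj). Qed.

Lemma ATE_qs (gamma : 'I_n -> R) q : ATE gamma (qs q) = - ATE gamma q.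
Proof.
rewrite /ATE -sumrN -sum_sw; apply: eq_bigr => -[[[y0 y1] dv] z] _.
rewrite ffunE swK /=; rewrite -mulrN; congr (_ * _); rewrite opprB //.
Qed.

Lemma compat_qs (P : obs_law R n l) q :
  compatible P q -> compatible (bar_law P) (qs q).
Proof.
case=> [[q0 q1] [ra <-]]; split; [split|split].
- by move=> t; rewrite ffunE.
- by rewrite -q1 -sum_sw; apply: eq_bigr => t _; rewrite ffunE swK.
- move=> y0 y1 dv z; rewrite !ffunE /= ra; congr (_ * _).
    by apply: eq_bigr => z' _; rewrite ffunE.
  rewrite exchange_big /=; apply: eq_bigr => a1 _; apply: eq_bigr => a0 _.
  rewrite [RHS](reindex_inj (inv_inj negfK)) /=.
  by apply: eq_bigr => av _; rewrite ffunE /= negfK.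
- apply/ffunP => -[[y d] z]; rewrite !ffunE /=.
  rewrite (reindex_inj sw_inj) /=; apply: eq_big.
    move=> -[[[a0 a1] av] c] /=; rewrite ffunE.
    case: (av c); rewrite /= ?xpair_eqE;
    by case: d.
  by move=> w _; rewrite ffunE swK.
Qed.

Lemma bar_lawK : involutive (@bar_law R n l).
Proof. by move=> P; apply/ffunP => -[[y d] z]; rewrite !ffunE /= negbK. Qed.

End Aux.
Arguments qs {R n l}.
Arguments compat_qs {R n l P q}.
Arguments ATE_qs {R n l}.
Arguments bar_lawK {R n l}.
Arguments sw {n l}.


Theorem proposition1 (R : realType) (n l : nat) (gamma : 'I_n -> R)
  (gamma_incr : forall i j : 'I_n, (i < j)%N -> gamma i < gamma j)
  (P : obs_law R n l) (hP : is_pmf P) :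
  Ubound gamma P = (- Lbound gamma (bar_law P))%E.
Proof.
rewrite /Ubound /Lbound /ereal_inf oppeK; congr ereal_sup.
rewrite eqEsubset; split => x.
- case=> q Cq <-; exists ((ATE gamma (qs q))%:E).
    by exists (qs q) => //; exact: compat_qs.
  by rewrite ATE_qs /= opprK.
- case=> _ [q Cq <-] <-; exists (qs q).
    by have := compat_qs Cq; rewrite bar_lawK.
  by rewrite ATE_qs.
Qed.
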